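(* Let $\mathbf{r}=(r_1,\dots,r_n)$ be a vector of positive integers. Then $$\sum_{\sigma\in\mathfrak{S}^{\mathbf{r}}_n}q^{\mathrm{maj}(\sigma)}=[n]!\cdot\prod_{i=1}^n\big(1+(r_i-1)\,q\big).$$
   Context: For $1\le i\le n$ let $S_i=\{-1\}\cup\{2,3,\dots,r_i\}$ (a set of size $r_i$). An $\mathbf{r}$-signed permutation is a list $\sigma=(\sigma_1,\dots,\sigma_{n+1})=((j_1,\pi_1),(j_2,\pi_2),\dots,(j_n,\pi_n),0)$ where $\pi_1\cdots\pi_n$ is a permutation of $\{1,\dots,n\}$ and $j_k\in S_{\pi_k}$ for each $k$; $\mathfrak{S}^{\mathbf{r}}_n$ denotes the set of these. The entries lie in $\Lambda=\{(j,i):1\le i\le n,\ j\in S_i\}\cup\{0\}$, linearly ordered as follows: pairs are compared lexicographically (first by $j$, then by $i$), and $0<(j,i)$ if and only if $j>0$. The descent set is $\mathrm{Des}(\sigma)=\{k\in\{1,\dots,n\}:\sigma_k>\sigma_{k+1}\}$ and $\mathrm{maj}(\sigma)=\sum_{k\in\mathrm{Des}(\sigma)}k$. $[m]=1+q+\cdots+q^{m-1}$ and $[n]!=[n][n-1]\cdots[1]$. *)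

(* Defs.v *)
From HB Require Import structures.
From mathcomp Require Import all_boot all_order all_algebra all_fingroup.
Set Implicit Arguments. Unset Strict Implicit. Unset Printing Implicit Defensive.
Import Order.TTheory GRing.Theory Num.Theory.
Local Open Scope ring_scope.

(* Indices are 0-based: the paper's i in {1..n} is our i : 'I_n (value i-1).
   This shift is order preserving, so the order on Lambda is unchanged. *)

Definition inS n (r : 'I_n -> nat) (i : 'I_n) (j : int) : bool :=
  (j == -1) || ((2%:Z <= j) && (j <= (r i)%:Z)).

(* Entries of Lambda: None is 0, Some (j, i) is the pair (j, i). *)
Definition entry := option (int * nat).

(* strict order on Lambda: pairs lexicographic; 0 < (j,i) iff j > 0
   (hence, the order being linear and j <> 0, (j,i) < 0 iff j <= 0). *)
Definition ltE (x y : entry) : bool :=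
  match x, y with
  | Some (j, i), Some (j', i') => (j < j') || ((j == j') && (i < i')%N)
  | None, Some (j, _) => 0 < j
  | Some (j, _), None => ~~ (0 < j)
  | None, None => false
  end.

(* sigma_{k+1} for k : nat (0-based position): sigma_{n+1} = 0 *)
Definition sigma_at n (p : 'S_n) (J : 'I_n -> int) (k : nat) : entry :=
  match insub k : option 'I_n with
  | Some k' => Some (J k', val (p k'))
  | None => None
  end.

(* maj: paper position k+1 (k : 'I_n) is a descent iff sigma_{k+1} > sigma_{k+2} *)
Definition maj n (p : 'S_n) (J : 'I_n -> int) : nat :=
  (\sum_(k < n | ltE (sigma_at p J k.+1) (sigma_at p J k)) k.+1)%N.

Definition qint (m : nat) : {poly int} := \sum_(i < m) 'X^i.
Definition qfact (n : nat) : {poly int} := \prod_(m < n) qint m.+1.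

(* bound on the codes used to enumerate the letters j: a code c : 'I_(rmax r)
   stands for the integer c - 1, covering -1 .. max r_i *)
Definition rmax n (r : 'I_n -> nat) : nat := (\max_(i < n) r i + 2)%N.
Definition decJ n (r : 'I_n -> nat) (J : {ffun 'I_n -> 'I_(rmax r)}) (k : 'I_n) : int :=
  (val (J k))%:Z - 1.

(* Main.v *)
Require Import Defs.
From HB Require Import structures.
From mathcomp Require Import all_boot all_order all_algebra all_fingroup.
From mathcomp Require Import zify ring.
Import GRing.Theory Num.Theory.
Local Open Scope ring_scope.

Lemma ltE_trans x y z : ltE x y -> ltE y z -> ltE x z.
Proof.
case: x => [[j i]|]; case: y => [[j' i']|]; case: z => [[j'' i'']|] //=; lia.
Qed.
Lemma ltE_irr x : ltE x x = false.
Proof. case: x => [[j i]|] //=; lia. Qed.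
Lemma ltE_tot x y : x != y -> ltE x y || ltE y x.
Proof. case: x => [[j i]|]; case: y => [[j' i']|] //=; try lia.
case: (eqVneq j j') => [->|]; case: (eqVneq i i') => [->|] //; first by rewrite eqxx.
all: move=> *; lia.
Qed.

Fixpoint majr (x : entry) (s : seq entry) (k : nat) : nat :=
  if s is y :: s' then ((if ltE y x then k else 0) + majr y s' k.+1)%N else 0%N.
Definition majs (s : seq entry) : nat := if s is x :: s' then majr x s' 1 else 0%N.

Lemma majr_rcons x s z k : majr x (rcons s z) k =
  (majr x s k + (if ltE z (last x s) then k + size s else 0))%N.
Proof.
elim: s x k => [|y s IH] x k /=; first by rewrite !addn0.
rewrite IH addnA; congr (_ + _)%N; case: ifP => //; lia.
Qed.

Lemma majs_rcons2 t y z : majs (rcons (rcons t y) z) =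
  (majs (rcons t y) + (if ltE z y then (size t).+1 else 0))%N.
Proof.
case: t => [|x t] /=; first by rewrite addn0.
by rewrite majr_rcons last_rcons size_rcons.
Qed.

Lemma sum_rev (s : seq entry) (F : seq entry -> {poly int}) :
  \sum_(t <- permutations s) F (rev t) = \sum_(t <- permutations s) F t.
Proof.
rewrite -(big_map rev xpredT F); apply: perm_big; apply: uniq_perm.
- by rewrite (map_inj_uniq (can_inj (@revK _))) permutations_uniq.
- exact: permutations_uniq.
move=> t; apply/mapP/idP => [[t' Ht' ->] | Ht].
  by move: Ht'; rewrite !mem_permutations perm_rev.
by exists (rev t); rewrite ?revK // mem_permutations perm_rev -mem_permutations.
Qed.

Lemma sum_last (u : seq entry) (F : seq entry -> {poly int}) : (0 < size u)%N ->
  \sum_(t <- permutations u) F t =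
  \sum_(y <- undup u) \sum_(t <- permutations (rem y u)) F (rcons t y).
Proof.
move=> Hu; rewrite -[LHS](sum_rev u F) (perm_big _ (permutationsE Hu)) big_allpairs_dep.
apply: eq_bigr => y _; rewrite -[RHS]sum_rev; apply: eq_bigr => t _.
by rewrite rev_cons.
Qed.

Lemma count_strict (a b : pred entry) u x0 : subpred a b -> x0 \in u -> b x0 -> ~~ a x0 ->
  (count a u < count b u)%N.
Proof.
move=> sab; elim: u => // x u IH; rewrite inE => /orP[/eqP<- | ux0] bx0 nax0 /=.
  by rewrite (negbTE nax0) bx0 add0n add1n ltnS; apply: sub_count.
have h := IH ux0 bx0 nax0; case ax: (a x); first by rewrite (sab _ ax) /=; lia.
case: (b x) => /=; lia.
Qed.
Arguments ltE_trans {x y z}.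
Arguments ltE_tot {x y}.

Lemma sum_iota_X c N : \sum_(k <- iota c N) ('X^k : {poly int}) = 'X^c * qint N.
Proof.
rewrite /qint big_distrr /= -[c]addn0 iotaDl big_map.
rewrite -(big_mkord xpredT (fun i => 'X^(c + 0) * 'X^i)).
apply: congr_big => //; first by rewrite /index_iota subn0.
by move=> i _; rewrite addn0 exprD.
Qed.

Lemma count_lt_size y u : y \in u -> (count (ltE y) u < size u)%N.
Proof.
move=> yu; rewrite -count_predT; apply: (@count_strict (ltE y) predT u y) => //; by rewrite ltE_irr.
Qed.

Lemma count_mono y y' u : ltE y y' -> y' \in u -> (count (ltE y') u < count (ltE y) u)%N.
Proof.
move=> hyy' yu; apply: (@count_strict (ltE y') (ltE y) u y') => //; last by rewrite ltE_irr.
by move=> x hx; apply: ltE_trans hyy' hx.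
Qed.

Arguments count_mono {y y' u}.
Arguments count_lt_size {y u}.
Lemma ltE_nlt x y : x != y -> ~~ ltE x y -> ltE y x.
Proof. by move=> /ltE_tot /orP[->|]. Qed.
Arguments ltE_nlt {x y}.

Lemma sum_exps {u z n} : uniq (z :: u) -> size u = n.+1 ->
  \sum_(y <- u) ('X^((if ltE z y then n.+1 else 0) + count (ltE y) u) : {poly int})
  = 'X^(count (ltE z) u) * qint n.+1.
Proof.
move=> /= /andP[zu Uu] Hs.
set e := fun y => ((if ltE z y then n.+1 else 0) + count (ltE y) u)%N.
rewrite -(big_map e xpredT (fun k => 'X^k)) -sum_iota_X; apply: perm_big.
have yz y : y \in u -> y != z by move=> yu; apply: contraNneq zu => <-.
have Ue : uniq (map e u).
  rewrite map_inj_in_uniq // => y y' yu y'u.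
  suff H : forall a b, a \in u -> b \in u -> ltE a b -> e a != e b.
    move=> eq; apply/eqP; apply: contraT => ne.
    case/orP: (ltE_tot ne) => h; [move: (H _ _ yu y'u h) | move: (H _ _ y'u yu h)];
      by rewrite eq eqxx.
  move=> a b au bu hab; rewrite /e.
  have := count_mono hab bu; have := count_lt_size au; have := count_lt_size bu.
  case za: (ltE z a); case zb: (ltE z b); rewrite ?Hs => *; try lia.
have sub : {subset map e u <= iota (count (ltE z) u) n.+1}.
  move=> k /mapP[y yu ->]; rewrite mem_iota /e.
  have := count_lt_size yu; have := count_size (ltE z) u.
  case zy: (ltE z y).
    have := count_mono zy yu; rewrite Hs; lia.
  have yz' : ltE y z by apply: (ltE_nlt _ (negbT zy)); rewrite eq_sym yz.
  have : (count (ltE z) u <= count (ltE y) u)%N.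
    by apply: sub_count => x hx; apply: ltE_trans yz' hx.
  rewrite Hs; lia.
have Hsz : (size (iota (count (ltE z) u) n.+1) <= size (map e u))%N.
  by rewrite size_iota size_map Hs.
have [_ Heq] := uniq_min_size Ue sub Hsz.
by apply: uniq_perm => //; apply: iota_uniq.
Qed.

Lemma qfactS n : qfact n.+1 = qfact n * qint n.+1.
Proof. by rewrite /qfact big_ord_recr. Qed.

Lemma key n : forall (u : seq entry) z, uniq (z :: u) -> size u = n ->
  \sum_(t <- permutations u) ('X^(majs (rcons t z)) : {poly int})
  = 'X^(count (ltE z) u) * qfact n.
Proof.
elim: n => [|n IH] u z Hu Hs.
  case: u Hs Hu => // _ _.
  by rewrite /= big_cons big_nil /qfact big_ord0 mulr1 addr0.
have Hu' := Hu; move: Hu' => /= /andP[zu Uu].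
rewrite sum_last ?Hs // undup_id //.
have step : forall y, y \in u ->
  \sum_(t <- permutations (rem y u)) ('X^(majs (rcons (rcons t y) z)) : {poly int})
  = 'X^((if ltE z y then n.+1 else 0) + count (ltE y) u) * qfact n.
  move=> y yu.
  have pu : perm_eq u (y :: rem y u) := perm_to_rem yu.
  have Hsr : size (rem y u) = n by rewrite size_rem // Hs.
  have Ur : uniq (y :: rem y u) by rewrite -(perm_uniq pu).
  have cnt : count (ltE y) u = count (ltE y) (rem y u).
    by move/seq.permP: pu => ->; rewrite /= ltE_irr add0n.
  rewrite big_seq.
  under eq_bigr => t ht.
    rewrite majs_rcons2.
    have -> : size t = n.
      by move: ht; rewrite mem_permutations => /perm_size ->.
    rewrite exprD.
    over.
  rewrite -big_seq -big_distrl /= (IH _ _ Ur Hsr) cnt exprD.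
  ring.
rewrite (eq_big_seq _ step) -big_distrl /= (sum_exps (u:=u) (z:=z) Hu Hs) qfactS.
ring.
Qed.

Lemma maj_nat (f : nat -> entry) m :
  (\sum_(k < m | ltE (f k.+1) (f k)) k.+1)%N = majs (map f (iota 0 m.+1)).
Proof.
elim: m => [|m IH]; first by rewrite big_ord0.
rewrite big_mkcond big_ord_recr -big_mkcond IH.
have E k : iota 0 k.+1 = rcons (iota 0 k) k by rewrite -addn1 iotaD cats1.
by rewrite (E m.+1) map_rcons (E m) map_rcons majs_rcons2 size_map size_iota.
Qed.

Lemma maj_seq n (p : 'S_n) (J : 'I_n -> int) :
  maj p J = majs (rcons [seq Some (J k, val (p k)) | k <- enum 'I_n] None).
Proof.
rewrite /maj maj_nat -(addn1 n) iotaD cats1 map_rcons add0n.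
have -> : sigma_at p J n = None by rewrite /sigma_at insubN // ltnn.
congr (majs (rcons _ _)).
rewrite -val_enum_ord -map_comp; apply: eq_map => k /=.
by rewrite /sigma_at valK.
Qed.

Lemma bridge n (g : 'I_n -> entry) (ginj : injective g) (H : seq entry -> {poly int}) :
  \sum_(p : 'S_n) H [seq g (p k) | k <- enum 'I_n]
  = \sum_(t <- permutations [seq g k | k <- enum 'I_n]) H t.
Proof.
set F := fun p : 'S_n => [seq g (p k) | k <- enum 'I_n].
have FE p : F p = map g (map p (enum 'I_n)) by rewrite /F; elim: (enum 'I_n) => //= ? ? ->.
rewrite (_ : \sum_(p : 'S_n) H (F p) = \sum_(t <- map F (index_enum {perm 'I_n})) H t);
  last by rewrite big_map.
apply: perm_big.
have Finj : injective F.
  move=> p p'; rewrite !FE => /(inj_map ginj) /eq_in_map E.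
  by apply/permP => i; apply: E; rewrite mem_enum.
have US : uniq [seq g k | k <- enum 'I_n] by rewrite (map_inj_uniq ginj) enum_uniq.
have UF : uniq (map F (index_enum {perm 'I_n})).
  by rewrite (map_inj_uniq Finj) index_enum_uniq.
have sub : {subset map F (index_enum {perm 'I_n}) <= permutations [seq g k | k <- enum 'I_n]}.
  move=> t /mapP[p _ ->]; rewrite mem_permutations FE; apply: perm_map.
  apply: uniq_perm; rewrite ?enum_uniq ?(map_inj_uniq (@perm_inj _ p)) ?enum_uniq //.
  move=> x; rewrite mem_enum; apply/mapP; exists (p^-1 x)%g; rewrite ?mem_enum ?permKV //.
have Hsz : (size (permutations [seq g k | k <- enum 'I_n]) <= size (map F (index_enum {perm 'I_n})))%N.
  rewrite size_permutations // size_map size_map size_enum_ord.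
  by rewrite /index_enum unlock -enumT -cardT card_Sn.
have [_ Heq] := uniq_min_size UF sub Hsz.
by apply: uniq_perm => //; apply: permutations_uniq.
Qed.

Lemma X_count (T : eqType) (P : pred T) (s : seq T) :
  ('X^(count P s) : {poly int}) = \prod_(i <- s) (if P i then 'X else 1).
Proof.
elim: s => [|x s IH]; first by rewrite big_nil expr0.
by rewrite big_cons /= exprD IH; case: (P x); rewrite ?expr1 ?expr0.
Qed.

Lemma factor N R : (1 <= R)%N -> (R.+2 <= N)%N ->
  \sum_(c < N | (c%:Z - 1 == -1) || ((2%:Z <= c%:Z - 1) && (c%:Z - 1 <= R%:Z)))
     (if 0 < c%:Z - 1 then 'X else 1 : {poly int})
  = 1 + (R%:R - 1) *: 'X.
Proof.
move=> R1 RN.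
rewrite big_mkcond /=.
rewrite (eq_bigr (fun c : 'I_N => ((c == 0%N :> nat)%:R : {poly int})
     + (((3 <= c) && (c < R.+2))%N%:R : int) *: 'X)); last first.
  move=> [c hc] _ /=.
  case: c hc => [|[|[|c]]] hc /=; rewrite ?scale0r ?addr0 ?add0r //.
  case: ifP => H.
    have -> : (c.+3 < R.+2)%N by lia.
    by rewrite scale1r.
  have -> : (c.+3 < R.+2)%N = false by lia.
  by rewrite scale0r.
rewrite big_split /= -scaler_suml /=.
have S : (\sum_(i < N) (2 < i < R.+2)%N = R - 1)%N.
  rewrite -(big_mkord xpredT (fun i => (2 < i < R.+2)%N : nat)).
  rewrite (@big_cat_nat _ _ _ 3) //; last by lia.
  rewrite (@big_cat_nat _ _ _ R.+2 3) //.
  rewrite (@eq_big_nat _ _ _ 0 3 _ (fun _ => 0%N)); last by move=> i hi; have -> : (2 < i < R.+2)%N = false by lia.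
  rewrite (@eq_big_nat _ _ _ 3 R.+2 _ (fun _ => 1%N)); last by move=> i hi; have -> : (2 < i < R.+2)%N = true by lia.
  rewrite (@eq_big_nat _ _ _ R.+2 N _ (fun _ => 0%N)); last by move=> i hi; have -> : (2 < i < R.+2)%N = false by lia.
  rewrite !sum_nat_const_nat /= !muln0 muln1 add0n addn0; lia.
have S' : \sum_(i < N) (((2 < i < R.+2)%N)%:R : int) = (R - 1)%N%:R by rewrite -S natr_sum.
rewrite S'.
case: N RN {S S'} => // N RN.
rewrite big_ord_recl /= big1 ?addr0; last by move=> i _.
by rewrite natrB.
Qed.

Theorem mainTheorem9 (n : nat) (r : 'I_n -> nat) (hr : forall i, (0 < r i)%N) :
  \sum_(p : 'S_n)
     \sum_(J : {ffun 'I_n -> 'I_(rmax r)} | [forall k, inS r (p k) (decJ J k)])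
        'X^(maj p (decJ J))
  = qfact n * \prod_(i < n) (1 + ((r i)%:R - 1) *: 'X).
Proof.
pose gK := fun (K : {ffun 'I_n -> 'I_(rmax r)}) (i : 'I_n) => (Some (decJ K i, val i) : entry).
have gKinj K : injective (gK K) by move=> i j [] _ /val_inj.
transitivity (\sum_(p : 'S_n) \sum_(K : {ffun 'I_n -> 'I_(rmax r)} | [forall i, inS r i (decJ K i)])
   ('X^(majs (rcons [seq gK K (p k) | k <- enum 'I_n] None)) : {poly int})).
  apply: eq_bigr => p _.
  have hinj : injective (fun K : {ffun 'I_n -> 'I_(rmax r)} => [ffun k => K (p k)]).
    by move=> K K' /ffunP E; apply/ffunP => i; have := E (p^-1 i)%g; rewrite !ffunE permKV.
  rewrite (reindex_inj hinj); apply: eq_big => K.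
    apply/forallP/forallP => H i.
      by have := H (p^-1 i)%g; rewrite /decJ ffunE permKV.
    by have := H (p i); rewrite /decJ ffunE.
  move=> _; rewrite maj_seq; congr ('X^(majs (rcons _ _))).
  by apply: eq_map => k; rewrite /gK /decJ ffunE.
rewrite exchange_big /=.
transitivity (\sum_(K : {ffun 'I_n -> 'I_(rmax r)} | [forall i, inS r i (decJ K i)])
   (\prod_(i < n) (if 0 < decJ K i then 'X else 1 : {poly int})) * qfact n).
  apply: eq_bigr => K _.
  rewrite (@bridge n (gK K) (gKinj K) (fun t => 'X^(majs (rcons t None)))).
  rewrite (key n); last first.
  - by rewrite size_map size_enum_ord.
  - rewrite /= (map_inj_uniq (gKinj K)) enum_uniq andbT.
    by apply/mapP => -[].
  rewrite count_map X_count big_enum /=.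
  by congr (_ * _); apply: eq_bigr.
rewrite -big_distrl /= mulrC; congr (_ * _).
transitivity (\prod_(i < n) \sum_(c : 'I_(rmax r) | inS r i ((val c)%:Z - 1))
    (if 0 < (val c)%:Z - 1 then 'X else 1 : {poly int})); last first.
  apply: eq_bigr => i _; rewrite /inS factor //.
  by rewrite /rmax addn2 !ltnS (leq_bigmax i).
rewrite bigA_distr_big_dep; apply: eq_big => K //.
Qed.
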